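(* Let $r\ge 2$ be an integer and let $G$ be a finite simple connected $K_{r+1}$-free graph of order $n$ with minimum degree $\delta$. Put $c=\lceil \delta/2\rceil$. Then $$\gamma^{0}_{st}(G)\le n-\frac{r}{r-1}\left(-c+\sqrt{c^2+4\,\frac{r-1}{r}\,c\,n}\right).$$ Moreover, the bound is sharp: for every integer $r\ge 2$ there exists a connected $K_{r+1}$-free graph (in fact an $r$-partite graph of order $r^2(r-1)$) for which equality holds.
   Context: A graph is $K_p$-free if it contains no complete graph $K_p$ as a subgraph. For a vertex $v$ of a graph $G=(V,E)$, $N(v)$ is its open neighborhood, and for $f:V\to\mathbb{R}$ and $B\subseteq V$ write $f(B)=\sum_{v\in B}f(v)$; $f(V)$ is the weight of $f$. An inverse signed total dominating function (ISTDF) of $G$ is a function $f:V\to\{-1,1\}$ such that $f(N(v))\le 0$ for every $v\in V$. The inverse signed total domination number $\gamma^{0}_{st}(G)$ is the maximum weight of an ISTDF of $G$. *)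

(* Defs.v *)
From HB Require Import structures.
From mathcomp Require Import all_boot all_order all_algebra.
Set Implicit Arguments. Unset Strict Implicit. Unset Printing Implicit Defensive.
Import Order.TTheory GRing.Theory Num.Theory.
Local Open Scope ring_scope.

Definition simple_graph (T : finType) (e : rel T) : Prop :=
  symmetric e /\ irreflexive e.

Definition connected_graph (T : finType) (e : rel T) : Prop :=
  forall x y : T, connect e x y.

Definition Kp_free (p : nat) (T : finType) (e : rel T) : Prop :=
  ~ exists g : 'I_p -> T,
      injective g /\ forall i j : 'I_p, i != j -> e (g i) (g j).

Definition r_partite (r : nat) (T : finType) (e : rel T) : Prop :=
  exists p : T -> 'I_r, forall x y, e x y -> p x != p y.

Definition deg (T : finType) (e : rel T) (x : T) : nat := #|[set y | e x y]|.

(* minimum degree (the initial value #|T| exceeds every degree) *)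
Definition min_deg (T : finType) (e : rel T) : nat :=
  \big[minn/#|T|]_(x : T) deg e x.

(* functions V -> {-1,1} are encoded as {ffun T -> bool}: true = 1, false = -1 *)
Definition sgn (b : bool) : int := if b then 1 else -1.

Definition fN (T : finType) (e : rel T) (f : {ffun T -> bool}) (v : T) : int :=
  \sum_(y : T | e v y) sgn (f y).

Definition weight (T : finType) (f : {ffun T -> bool}) : int :=
  \sum_(x : T) sgn (f x).

Definition ISTDF (T : finType) (e : rel T) (f : {ffun T -> bool}) : bool :=
  [forall v : T, fN e f v <= 0].

(* maximum weight of an ISTDF (the constant -1 function is always an ISTDF,
   and every weight is >= -#|T|, so the base value -#|T| is harmless) *)
Definition inv_signed_total_dom (T : finType) (e : rel T) : int :=
  \big[Num.max/ - (#|T|%:Z)]_(f : {ffun T -> bool} | ISTDF e f) weight f.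

Definition istd_bound (R : rcfType) (r n delta : nat) : R :=
  let c : R := (uphalf delta)%:R in
  n%:R - (r%:R / (r.-1)%:R) *
         (- c + Num.sqrt (c ^+ 2 + 4%:R * ((r.-1)%:R / r%:R) * c * n%:R)).

(* Main.v *)
Require Import Defs.
From HB Require Import structures.
From mathcomp Require Import all_boot all_order all_algebra.
Import Order.TTheory GRing.Theory Num.Theory.
Local Open Scope ring_scope.
From mathcomp Require Import zify ring lra.
Local Close Scope ring_scope.
Set Implicit Arguments. Unset Strict Implicit. Unset Printing Implicit Defensive.

Definition nb (T : finType) (e : rel T) (X : {set T}) (v : T) : nat :=
  \sum_(w in X) (e v w : nat).

Definition DD (T : finType) (e : rel T) (X : {set T}) : nat :=
  \sum_(u in X) nb e X u.

Definition clique (T : finType) (e : rel T) (K : {set T}) : Prop :=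
  {in K &, forall x y, x != y -> e x y}.

Definition nocliq (T : finType) (e : rel T) (p : nat) (S : {set T}) : Prop :=
  forall K : {set T}, K \subset S -> #|K| = p -> ~ clique e K.

Lemma nb_card (T : finType) (e : rel T) X v : nb e X v = #|[set w in X | e v w]|.
Proof.
rewrite /nb -sum1_card big_mkcond [RHS]big_mkcond /=.
apply: eq_bigr => w _; rewrite !inE; by case: (w \in X); case: (e v w).
Qed.

Lemma double_count (T : finType) (e : rel T) (X Y : {set T}) :
  symmetric e -> \sum_(u in X) nb e Y u = \sum_(w in Y) nb e X w.
Proof.
move=> sym; rewrite /nb exchange_big /=.
apply: eq_bigr => w _; apply: eq_bigr => u _; by rewrite sym.
Qed.

Lemma nb_split (T : finType) (e : rel T) (S A : {set T}) v :
  A \subset S -> nb e S v = nb e A v + nb e (S :\: A) v.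
Proof.
move=> sAS; rewrite /nb (big_setID A) /=; congr (_ + _).
by rewrite (setIidPr sAS).
Qed.

Lemma nb_sub (T : finType) (e : rel T) (S A : {set T}) v :
  A \subset S -> nb e A v <= nb e S v.
Proof. by move=> sAS; rewrite (nb_split e v sAS) leq_addr. Qed.

Lemma sum_split (T : finType) (S A : {set T}) (F : T -> nat) :
  A \subset S -> \sum_(u in S) F u = \sum_(u in A) F u + \sum_(u in S :\: A) F u.
Proof.
move=> sAS; rewrite (big_setID A) /=; congr (_ + _).
by rewrite (setIidPr sAS).
Qed.

Lemma turan_step (r D DA b d : nat) :
  r.+1 * DA <= r * d ^ 2 -> D <= DA + 2 * b * d ->
  r.+2 * D <= r.+1 * (b + d) ^ 2.
Proof.
move=> h1 h2.
have h3 : r.+2 * D <= r.+2 * DA + r.+2 * (2 * b * d) by rewrite -mulnDr leq_mul2l h2 orbT.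
have key : r.+1 * (r.+2 * DA + r.+2 * (2 * b * d)) <= r.+1 * (r.+1 * (b + d) ^ 2).
  have h4 : r.+1 * (r.+2 * DA) <= r.+2 * (r * d ^ 2).
    by rewrite mulnCA leq_mul2l h1 orbT.
  have sq : (0 <= (Posz (r.+1 * b) - Posz d) * (Posz (r.+1 * b) - Posz d))%R.
    by rewrite -expr2 sqr_ge0.
  nia.
rewrite leq_mul2l /= in key.
exact: leq_trans h3 key.
Qed.

Lemma clique2 (T : finType) (e : rel T) u w :
  symmetric e -> e u w -> clique e [set u; w].
Proof.
move=> sym euw x y /set2P[]-> /set2P[]->; rewrite ?eqxx //.
by rewrite sym.
Qed.

Lemma turan (T : finType) (e : rel T) : symmetric e -> irreflexive e ->
  forall r (S : {set T}), nocliq e r.+2 S -> r.+1 * DD e S <= r * #|S| ^ 2.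
Proof.
move=> sym irr r; elim: r => [|r IH] S ncS.
  rewrite mul1n mul0n leqn0 /DD; apply/eqP; apply: big1 => u uS.
  apply: big1 => w wS; case euw: (e u w) => //.
  have uw : u != w by apply: contraTneq euw => ->; rewrite irr.
  exfalso; apply: (ncS [set u; w]).
  - by apply/subsetP => x /set2P[]->.
  - by rewrite cards2 uw.
  - exact: clique2.
case: (set_0Vmem S) => [->|[v0 v0S]].
  by rewrite /DD big_set0 muln0.
case: (arg_maxnP (nb e S) v0S) => v vS vmax.
set A := [set w in S | e v w].
have sAS : A \subset S by apply/subsetP => x; rewrite inE => /andP[].
have vA : v \notin A by rewrite inE irr andbF.
have ncA : nocliq e r.+2 A.
  move=> K sKA cK clK; apply: (ncS (v |: K)).
  - apply/subsetP => x /setU1P[->//|xK]; exact: (subsetP sAS _ (subsetP sKA _ xK)).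
  - rewrite cardsU1 cK; have -> : v \notin K.
      by apply: contra vA => vK; exact: (subsetP sKA).
    by [].
  - move=> x y /setU1P[->|xK] /setU1P[->|yK]; rewrite ?eqxx //.
    + by move=> _; have := subsetP sKA _ yK; rewrite inE => /andP[].
    + by move=> _; have := subsetP sKA _ xK; rewrite inE sym => /andP[].
    + exact: clK.
have IHA := IH A ncA.
set B := S :\: A.
have hd : nb e S v = #|A| by rewrite nb_card.
have hb : #|B| + #|A| = #|S|.
  by rewrite addnC -(cardsID A S) (setIidPr sAS).
rewrite -hb; apply: (turan_step IHA).
rewrite {1}/DD (sum_split _ sAS).
have e1 : \sum_(u in A) nb e S u = DD e A + \sum_(u in A) nb e B u.
  by rewrite /DD -big_split /=; apply: eq_bigr => u _; rewrite (nb_split _ _ sAS).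
have e2 : \sum_(u in A) nb e B u <= #|B| * #|A|.
  rewrite double_count //.
  rewrite -sum_nat_const; apply: leq_sum => w wB.
  rewrite -hd; apply: leq_trans (vmax _ _); first exact: nb_sub.
  by move: wB; rewrite inE => /andP[].
have e3 : \sum_(u in B) nb e S u <= #|B| * #|A|.
  rewrite -sum_nat_const; apply: leq_sum => w wB.
  by rewrite -hd; apply: vmax; move: wB; rewrite inE => /andP[].
rewrite e1 -/B; lia.
Qed.

Lemma Kfree_nocliq (T : finType) (e : rel T) p :
  Kp_free p e -> forall S, nocliq e p S.
Proof.
move=> H S K _ cK clK; apply: H.
pose g := fun i : 'I_p => @enum_val _ (pred_of_set K) (cast_ord (esym cK) i).
exists g; split.
  move=> i j /enum_val_inj /(congr1 val) /= ij; exact: val_inj.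
move=> i j ij; apply: clK; try exact: enum_valP.
apply: contra ij => /eqP /enum_val_inj /(congr1 val) /= ij'.
by apply/eqP; apply: val_inj.
Qed.

Lemma nb_mk (T : finType) (e : rel T) X v :
  nb e X v = \sum_w ((w \in X) && e v w : nat).
Proof. by rewrite /nb big_mkcond /=; apply: eq_bigr => w _; case: (w \in X). Qed.

Lemma Posz_sum (I : finType) (F : I -> nat) :
  Posz (\sum_i F i) = (\sum_i Posz (F i))%R.
Proof. exact: (big_morph Posz PoszD (erefl _)). Qed.

Lemma fN_nb (T : finType) (e : rel T) (f : {ffun T -> bool}) v :
  fN e f v = (Posz (nb e [set x | f x] v) - Posz (nb e (~: [set x | f x]) v))%R.
Proof.
rewrite /fN big_mkcond /= !nb_mk !Posz_sum -sumrB.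
apply: eq_bigr => w _; rewrite !inE.
by case: (e v w); case: (f w).
Qed.

Lemma deg_nb (T : finType) (e : rel T) (P : {set T}) v :
  deg e v = nb e P v + nb e (~: P) v.
Proof.
rewrite /deg; have -> : [set y | e v y] = [set w in setT | e v w].
  by apply/setP => y; rewrite !inE.
by rewrite -nb_card (nb_split _ _ (subsetT P)) setTD.
Qed.

Lemma weight_card (T : finType) (f : {ffun T -> bool}) :
  weight f = (Posz #|[set x | f x]| - Posz #|~: [set x | f x]|)%R.
Proof.
rewrite /weight -!sum1_card !(big_mkcond (fun i => i \in _)) /= !Posz_sum -sumrB.
apply: eq_bigr => w _; rewrite !inE; by case: (f w).
Qed.

Lemma min_deg_le (T : finType) (e : rel T) v : min_deg e <= deg e v.
Proof.
rewrite /min_deg; have : v \in index_enum T by rewrite mem_index_enum.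
elim: (index_enum T) => [//|a s IH]; rewrite inE big_cons => /orP[/eqP<-|vs].
  exact: geq_minl.
by apply: leq_trans (geq_minr _ _) (IH vs).
Qed.

Lemma comb (T : finType) (e : rel T) q (f : {ffun T -> bool}) :
  simple_graph e -> Kp_free q.+2 e -> ISTDF e f ->
  uphalf (min_deg e) * #|[set x | f x]| * q.+1 <= q * #|~: [set x | f x]| ^ 2.
Proof.
move=> [sym irr] Kf /forallP If.
set P := [set x | f x]; set M := ~: P.
have hPM : forall v, nb e P v <= nb e M v.
  move=> v; have := If v; rewrite fN_nb subr_le0 lez_nat; exact.
have hc : forall v, uphalf (min_deg e) <= nb e M v.
  move=> v; rewrite leq_uphalf_double; apply: leq_trans (min_deg_le e v) _.
  rewrite (deg_nb _ P) -addnn leq_add2r; exact: hPM.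
have h1 : uphalf (min_deg e) * #|P| <= DD e M.
  apply: (@leq_trans (\sum_(v in P) nb e M v)).
    by rewrite mulnC -sum_nat_const; apply: leq_sum => v _; exact: hc.
  rewrite double_count // /DD; apply: leq_sum => u _; exact: hPM.
have h2 := turan sym irr (@Kfree_nocliq _ _ _ Kf M).
rewrite [_ * q.+1]mulnC; apply: leq_trans h2; by rewrite leq_mul2l h1 orbT.
Qed.
Local Open Scope ring_scope.

Lemma real_bound (R : rcfType) (q d p m : nat) : (1 <= q)%N ->
  (uphalf d * p * q.+1 <= q * m ^ 2)%N ->
  ((Posz p - Posz m)%:~R : R) <= istd_bound R q.+1 (p + m) d.
Proof.
move=> q1 h; rewrite /istd_bound /=.
set C := (uphalf d)%:R : R.
have hR : C * p%:R * q.+1%:R <= q%:R * m%:R ^+ 2 :> R.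
  by rewrite -!natrM -natrX -natrM ler_nat.
have qpos : 0 < q%:R :> R by rewrite ltr0n.
have rpos : 0 < q.+1%:R :> R by rewrite ltr0n.
have C0 : 0 <= C by rewrite ler0n.
have m0 : 0 <= m%:R :> R by rewrite ler0n.
set K := C ^+ 2 + _.
set Y := C + 2%:R * m%:R * q%:R / q.+1%:R.
have Y0 : 0 <= Y.
  rewrite /Y addr_ge0 // divr_ge0 // ?ler0n // ?mulr_ge0 // ?ler0n //.
have KY : K <= Y ^+ 2.
  rewrite -subr_ge0.
  have -> : Y ^+ 2 - K = 4%:R * q%:R / q.+1%:R ^+ 2 * (q%:R * m%:R ^+ 2 - C * p%:R * q.+1%:R).
    rewrite /Y /K natrD; field; by rewrite addrC natr1 lt0r_neq0.
  apply: mulr_ge0; last by rewrite subr_ge0.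
  apply: divr_ge0; last by rewrite exprn_ge0 // ltW.
  by rewrite mulr_ge0 // ler0n.
have sK : Num.sqrt K <= Y.
  by rewrite -(ger0_norm Y0) -sqrtr_sqr ler_sqrt // exprn_ge0.
have step : q.+1%:R / q%:R * (- C + Num.sqrt K) <= 2%:R * m%:R :> R.
  apply: (@le_trans _ _ (q.+1%:R / q%:R * (- C + Y))).
    by rewrite ler_wpM2l ?divr_ge0 ?ler0n // lerD2l.
  have -> : q.+1%:R / q%:R * (- C + Y) = 2%:R * m%:R.
    rewrite /Y; field; by rewrite addrC natr1 !lt0r_neq0.
  by [].
rewrite rmorphB /= natrD.
lra.
Qed.


Lemma f0_istdf (T : finType) (e : rel T) : ISTDF e [ffun => false].
Proof.
apply/forallP => v; rewrite fN_nb.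
have -> : [set x | [ffun=> false] x] = set0 :> {set T} by apply/setP => x; rewrite !inE ffunE.
by rewrite /nb big_set0 sub0r oppr_le0.
Qed.

Lemma f0_weight (T : finType) : weight ([ffun => false] : {ffun T -> bool}) = - Posz #|T|.
Proof.
rewrite weight_card.
have -> : [set x | ([ffun=> false] : {ffun T -> bool}) x] = set0 by apply/setP => x; rewrite !inE ffunE.
by rewrite cards0 setC0 cardsT sub0r.
Qed.

Lemma part1 (R : rcfType) (r : nat) (hr : (2 <= r)%N) (T : finType) (e : rel T) :
  simple_graph e -> Kp_free r.+1 e ->
  ((inv_signed_total_dom e)%:~R : R) <= istd_bound R r #|T| (min_deg e).
Proof.
case: r hr => [//|q] hr sg Kf.
have q1 : (1 <= q)%N by [].
have one : forall f, ISTDF e f -> (weight f)%:~R <= istd_bound R q.+1 #|T| (min_deg e) :> R.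
  move=> f If; rewrite weight_card -(cardsC [set x | f x]).
  apply: real_bound => //; exact: comb.
rewrite /inv_signed_total_dom.
elim/big_ind: _ => //.
  by rewrite -f0_weight; apply: one; exact: f0_istdf.
by move=> x y hx hy; rewrite /Order.max; case: ifP.
Qed.
Local Close Scope ring_scope.
Notation VT s := ('I_s.+2 * 'I_s.+1 * 'I_s.+2)%type.

Definition ex_e (s : nat) : rel (VT s) := fun x y =>
  (x.1.1 != y.1.1) && ((x.2 == ord0) && (y.2 == ord0) ||
     (x.1.2 == y.1.2) && [|| x.2 == y.2, x.2 == ord0 | y.2 == ord0]).

Lemma ex_simple s : simple_graph (@ex_e s).
Proof.
split.
  move=> [[a b] k] [[a' b'] k']; rewrite /ex_e /=.
  rewrite [a' == a]eq_sym [b' == b]eq_sym [k' == k]eq_sym.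
  by case: (k == ord0); case: (k' == ord0); case: (k == k'); case: (b == b'); case: (a == a').
by move=> x; rewrite /ex_e eqxx.
Qed.

Lemma partite_free (T : finType) (e : rel T) r : r_partite r e -> Kp_free r.+1 e.
Proof.
move=> [p hp] [g [gi ge]].
have inj : injective (fun i => p (g i)).
  move=> i j pij; apply/eqP; apply: contraT => ij.
  by move: (hp _ _ (ge _ _ ij)); rewrite pij eqxx.
by have := leq_card _ inj; rewrite !card_ord ltnn.
Qed.

Lemma ex_partite s : r_partite s.+2 (@ex_e s).
Proof. by exists (fun x => x.1.1) => x y /andP[]. Qed.

Lemma o1_neq0 s : (inord 1 : 'I_s.+2) != ord0.
Proof. by apply/eqP => /(congr1 val); rewrite /= inordK. Qed.

Lemma ex_connected s : connected_graph (@ex_e s).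
Proof.
pose m0 : VT s := ((ord0, ord0), ord0).
pose o1 : 'I_s.+2 := inord 1.
have o10 : o1 != ord0 := o1_neq0 s.
have Mto0 : forall a b, connect (@ex_e s) ((a, b), ord0) m0.
  move=> a b; case: (eqVneq a ord0) => [->|a0].
    apply: (@connect_trans _ _ ((o1, ord0), ord0)); apply: connect1;
      rewrite /ex_e /= ?eqxx ?andbT //= ?o10 // eq_sym ?o10 //.
  by apply/connect1; rewrite /ex_e /= a0.
have to0 : forall x, connect (@ex_e s) x m0.
  move=> [[a b] k].
  pose a' : 'I_s.+2 := if a == ord0 then o1 else ord0.
  apply: (connect_trans _ (Mto0 a' b)); apply/connect1.
  rewrite /ex_e /= !eqxx /= ?orbT ?andbT ?orbT ?andbT /a'.
  by case: (eqVneq a ord0) => [->|//]; rewrite eq_sym.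
move=> x y; apply: (connect_trans (to0 x)).
by rewrite sym_connect_sym; [exact: to0 | case: (ex_simple s)].
Qed.

Lemma ex_card s : #|{: VT s}| = (s.+2 ^ 2 * (s.+2 - 1))%N.
Proof. rewrite !card_prod !card_ord; lia. Qed.

Lemma min_deg_ge (T : finType) (e : rel T) d :
  (forall x, d <= deg e x) -> d <= #|T| -> d <= min_deg e.
Proof.
move=> h hT; rewrite /min_deg; elim/big_ind: _ => //.
by move=> x y hx hy; rewrite leq_min hx hy.
Qed.

Definition kk s (k : 'I_s.+2) : 'I_s.+2 := if k == ord0 then inord 1 else ord0.

Definition N1 s (x : VT s) : {set VT s} :=
  [set ((a', x.1.2), x.2) | a' in [set~ x.1.1]].
Definition N2 s (x : VT s) : {set VT s} :=
  [set ((a', x.1.2), kk x.2) | a' in [set~ x.1.1]].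

Lemma cardN s (b : 'I_s.+1) (k : 'I_s.+2) (a : 'I_s.+2) :
  #|[set ((a', b), k) | a' in [set~ a]]| = s.+1.
Proof.
rewrite card_imset; first by rewrite cardsC1 card_ord.
by move=> u v [].
Qed.

Lemma kk_neq s (k : 'I_s.+2) : kk k != k.
Proof.
rewrite /kk; case: (eqVneq k ord0) => [->|k0]; first exact: o1_neq0.
by rewrite eq_sym.
Qed.

Lemma deg_ge s (x : VT s) : (2 * s.+1 <= deg (@ex_e s) x)%N.
Proof.
rewrite /deg.
have dis : [disjoint N1 x & N2 x].
  rewrite -setI_eq0; apply/eqP/setP => y; rewrite !inE.
  apply/andP => -[/imsetP[u _ ->] /imsetP[w _ /(congr1 snd)]] /= h.
  by move: (kk_neq x.2); rewrite -h eqxx.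
have sub : N1 x :|: N2 x \subset [set y | ex_e x y].
  apply/subsetP => y; rewrite !inE => /orP[] /imsetP[a' ha' ->]; rewrite /ex_e /=;
    move: ha'; rewrite !inE eq_sym => -> /=; rewrite !eqxx /= ?orbT //.
  rewrite /kk; case: (x.2 == ord0) => /=; by rewrite ?orbT ?eqxx.
apply: leq_trans (subset_leq_card sub).
by rewrite cardsU (disjoint_setI0 dis) cards0 subn0 /N1 /N2 !cardN mul2n addnn.
Qed.

Lemma deg_x0 s : (deg (@ex_e s) ((ord0, ord0), inord 1) <= 2 * s.+1)%N.
Proof.
set x0 : VT s := ((ord0, ord0), inord 1).
have sub : [set y | ex_e x0 y] \subset N1 x0 :|: N2 x0.
  apply/subsetP => -[[a b] k]; rewrite !inE /ex_e /= => /andP[a0].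
  rewrite (negbTE (o1_neq0 s)) /= => /andP[/eqP<-] /orP[/eqP<-|/eqP->].
  - by apply/orP; left; apply/imsetP; exists a => //; rewrite !inE eq_sym.
  - apply/orP; right; apply/imsetP; exists a; first by rewrite !inE eq_sym.
    by rewrite /kk (negbTE (o1_neq0 s)).
apply: leq_trans (subset_leq_card sub) _.
by rewrite cardsU /N1 /N2 !cardN mul2n addnn leq_subr.
Qed.

Lemma ex_min_deg s : min_deg (@ex_e s) = (2 * s.+1)%N.
Proof.
apply/eqP; rewrite eqn_leq; apply/andP; split.
  exact: leq_trans (min_deg_le _ _) (deg_x0 s).
apply: min_deg_ge; first exact: deg_ge.
rewrite ex_card; nia.
Qed.

Definition exf s : {ffun VT s -> bool} := [ffun x => x.2 != ord0].

Definition phi s (v w : VT s) : VT s :=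
  if v.2 == ord0 then ((w.1.1, inord (w.2).-1), ord0) else ((w.1.1, w.1.2), ord0).

Lemma ex_istdf s : ISTDF (@ex_e s) (exf s).
Proof.
apply/forallP => v; rewrite fN_nb subr_le0 lez_nat !nb_card.
set A := [set w in _ | _]; set B := [set w in _ | _].
have inj : {in A &, injective (phi v)}.
  move=> [[a1 b1] k1] [[a2 b2] k2]; rewrite !inE /exf !ffunE /= => /andP[k10 e1] /andP[k20 e2].
  move: e1 e2; rewrite /phi /ex_e /=; case: (eqVneq v.2 ord0) => [v0|v0] /=.
    rewrite (negbTE k10) (negbTE k20) ?andbF /= => /and3P[_ /eqP<- _] /and3P[_ /eqP<- _].
    case=> -> /(congr1 val); rewrite /= !inordK; last 2 first.
    - by have := ltn_ord k2; case: (nat_of_ord k2) => //= n; lia.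
    - by have := ltn_ord k1; case: (nat_of_ord k1) => //= n; lia.
    move=> hk; congr (_, _); apply: val_inj => /=.
    move: k10 k20 hk; rewrite -!(inj_eq val_inj) /=; lia.
  rewrite (negbTE k10) (negbTE k20) ?orbF ?andbF /=.
  move=> /and3P[_ /eqP<- /eqP<-] /and3P[_ /eqP<- /eqP<-].
  by case=> ->.
have sub : phi v @: A \subset B.
  apply/subsetP => y /imsetP[[[a b] k] wA ->]; move: wA.
  rewrite !inE /exf !ffunE /phi /ex_e /= => /andP[k0 /andP[av h]].
  case: (eqVneq v.2 ord0) => [v0|v0] /=; rewrite ?eqxx /= av /= ?andbT //.
  rewrite orbT andbT; move: h; rewrite (negbTE v0) (negbTE k0) /= orbF.
  by case/andP.
rewrite -(card_in_imset inj); exact: subset_leq_card.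
Qed.

Lemma exM_card s : #|~: [set x | exf s x]| = (s.+2 * s.+1)%N.
Proof.
have -> : ~: [set x | exf s x] = setX [set: 'I_s.+2 * 'I_s.+1] [set ord0].
  by apply/setP => -[ab k]; rewrite !inE /exf ffunE negbK.
by rewrite cardsX cardsT cards1 card_prod !card_ord muln1.
Qed.

Local Open Scope ring_scope.

Lemma ex_value (R : rcfType) s :
  ((weight (exf s))%:~R : R) = istd_bound R s.+2 #|{: VT s}| (2 * s.+1)%N.
Proof.
rewrite weight_card.
have hP : #|[set x | exf s x]| = (#|{: VT s}| - s.+2 * s.+1)%N.
  by rewrite -(cardsC [set x | exf s x]) exM_card addnK.
rewrite hP exM_card ex_card /istd_bound.
have -> : uphalf (2 * s.+1) = s.+1 by rewrite mul2n uphalf_double.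
have mn : (s.+2 * s.+1 <= s.+2 ^ 2 * (s.+2 - 1))%N by nia.
have cast : forall a b : nat, ((Posz a - Posz b)%:~R : R) = a%:R - b%:R.
  by move=> a b; rewrite rmorphB.
rewrite cast natrB //.
set x := s%:R : R.
have E1 : (s.+1%:R : R) = x + 1 by rewrite -natr1.
have E2 : (s.+2%:R : R) = x + 2 by rewrite -!natr1 /x; lra.
have En : ((s.+2 ^ 2 * (s.+2 - 1))%N%:R : R) = (x + 2) ^+ 2 * (x + 1).
  by rewrite subn1 /= natrM natrX E2 E1.
have Eq : ((s.+2).-1%:R : R) = x + 1 by [].
have Em : ((s.+2 * s.+1)%N%:R : R) = (x + 2) * (x + 1).
  by rewrite natrM E2 E1.
rewrite En Em E2 Eq ?E1.
have x0 : 0 <= x by rewrite ler0n.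
have -> : (x + 1) ^+ 2 + 4%:R * ((x + 1) / (x + 2)) * (x + 1) * ((x + 2) ^+ 2 * (x + 1))
   = ((x + 1) * (2%:R * x + 3%:R)) ^+ 2.
  field; apply: lt0r_neq0; lra.
rewrite sqrtr_sqr ger0_norm; last by apply: mulr_ge0; lra.
field; apply: lt0r_neq0; rewrite -/x; lra.
Qed.

Unset Implicit Arguments.

Theorem theorem2p4 (R : rcfType) (r : nat) (hr : (2 <= r)%N) :
  (forall (T : finType) (e : rel T),
      (0 < #|T|)%N -> simple_graph e -> connected_graph e -> Kp_free r.+1 e ->
      ((inv_signed_total_dom e)%:~R : R) <= istd_bound R r #|T| (min_deg e))
  /\
  (exists (T : finType) (e : rel T),
      [/\ simple_graph e, connected_graph e, Kp_free r.+1 e, r_partite r e &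
          #|T| = (r ^ 2 * (r - 1))%N] /\
      ((inv_signed_total_dom e)%:~R : R) = istd_bound R r #|T| (min_deg e)).
Proof.
split.
  move=> T e _ sg _ Kf; exact: part1.
case: r hr => [//|[//|s]] hr.
exists ('I_s.+2 * 'I_s.+1 * 'I_s.+2)%type, (@ex_e s).
have sg := ex_simple s.
have Kf : Kp_free s.+3 (@ex_e s) by apply: partite_free; exact: ex_partite.
split.
  split; [exact: sg | exact: ex_connected | exact: Kf | exact: ex_partite | exact: ex_card].
apply/eqP; rewrite eq_le; apply/andP; split.
  exact: part1.
rewrite ex_min_deg -ex_value ler_int.
apply: le_bigmax_cond; exact: ex_istdf.
Qed.
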